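(* Let $(X,d_X)$ be a metric space and $C\in(0,\infty)$. Then $\Delta_X^{(c)}(R)\leq CR$ for all $R\in[0,\infty)$ if and only if $\Delta_X^{(u)}(r)\geq\frac1C r$ for all $r>0$.
   Context: For a cover $\mathcal{U}$ of $X$: $\mathrm{diam}(\mathcal{U})=\sup_{U\in\mathcal{U}}\mathrm{diam}(U)$; $\mathcal{L}(\mathcal{U})=\sup\{d\in[0,\infty): \text{every } E\subseteq X \text{ with } \mathrm{diam}(E)<d \text{ is contained in some } U\in\mathcal{U}\}$; point-finite means each point lies in only finitely many members. $\Delta_X^{(u)}(r)=\sup\{\mathcal{L}(\mathcal{U}): \mathcal{U} \text{ point-finite cover of } X,\ \mathrm{diam}(\mathcal{U})\leq r\}$, $\Delta_X^{(c)}(R)=\inf\{\mathrm{diam}(\mathcal{U}): \mathcal{U} \text{ point-finite cover of } X,\ \mathcal{L}(\mathcal{U})\geq R\}$. *)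

(* Defs.v *)
From mathcomp Require Import all_boot all_order all_algebra.
From mathcomp Require Import all_classical all_reals all_analysis.
Set Implicit Arguments. Unset Strict Implicit. Unset Printing Implicit Defensive.
Import Order.TTheory GRing.Theory Num.Theory.
Local Open Scope classical_set_scope.
Local Open Scope ring_scope.
Local Open Scope ereal_scope.

Section Covers.
Variables (R : realType) (X : Type) (d : X -> X -> R).

Definition is_metric : Prop :=
  [/\ (forall x y, (0 <= d x y)%R),
      (forall x y, d x y = 0%R <-> x = y),
      (forall x y, d x y = d y x) &
      (forall x y z, (d x z <= d x y + d y z)%R)].

(* diameter of a subset (convention: diam set0 = 0) *)
Definition diam (E : set X) : \bar R :=
  ereal_sup (0 |` [set (d x y)%:E | x in E & y in E]).

Definition is_cover (U : set (set X)) : Prop :=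
  forall x, exists2 V, U V & V x.

Definition point_finite (U : set (set X)) : Prop :=
  forall x, finite_set [set V | U V /\ V x].

(* diam(U) = sup of diameters of members (convention: sup over empty = 0) *)
Definition diam_cover (U : set (set X)) : \bar R :=
  ereal_sup (0 |` [set diam V | V in U]).

Definition lebesgue_number (U : set (set X)) : \bar R :=
  ereal_sup [set t%:E | t in [set t : R | (0 <= t)%R /\
     (forall E : set X, diam E < t%:E -> exists2 V, U V & E `<=` V)]].

Definition Delta_u (r : R) : \bar R :=
  ereal_sup [set lebesgue_number U | U in
     [set U | is_cover U /\ point_finite U /\ diam_cover U <= r%:E]].

Definition Delta_c (Rr : R) : \bar R :=
  ereal_inf [set diam_cover U | U in
     [set U | is_cover U /\ point_finite U /\ Rr%:E <= lebesgue_number U]].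

End Covers.

(* Main.v *)
Require Import Defs.
From mathcomp Require Import all_boot all_order all_algebra.
From mathcomp Require Import all_classical all_reals all_analysis.
Import Order.TTheory GRing.Theory Num.Theory.
Local Open Scope classical_set_scope.
Local Open Scope ring_scope.

Theorem lemma3p6 (R : realType) (X : Type) (d : X -> X -> R)
  (hd : is_metric d) (C : R) (hC : 0 < C) :
  (forall Rr : R, 0 <= Rr -> (Delta_c d Rr <= (C * Rr)%:E)%E) <->
  (forall r : R, 0 < r -> ((r / C)%:E <= Delta_u d r)%E).
Proof.
split.
- move=> H r r0.
  have rC0 : 0 <= r / C by rewrite divr_ge0 // ltW.
  apply/lee_mul01Pr; first by rewrite lee_fin.
  move=> t /andP[t0 t1].
  have R'0 : 0 <= t * (r / C) by rewrite mulr_ge0 // ltW.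
  have := H _ R'0.
  have -> : C * (t * (r / C)) = t * r.
    by rewrite mulrCA [C * _]mulrC -mulrA mulVf ?mulr1 ?gt_eqF.
  move=> h.
  have : (Delta_c d (t * (r / C)) < r%:E)%E.
    apply: (le_lt_trans h); rewrite lte_fin gtr_pMl //.
  case/ereal_inf_lt => y [U [cU [pU LU]] <-] dU.
  rewrite -EFinM.
  apply: (le_trans LU).
  apply: ereal_sup_ubound; exists U => //; split => //; split => //.
  exact: ltW.
- move=> H Rr Rr0.
  apply/lee_addgt0Pr => e e0.
  have r0 : 0 < C * Rr + e by rewrite ltr_wpDl // mulr_ge0 // ltW.
  have := H _ r0.
  have hlt : (Rr%:E < ((C * Rr + e) / C)%:E)%E.
    rewrite lte_fin ltr_pdivlMr // mulrC ltrDl //.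
  move=> h; have := lt_le_trans hlt h.
  case/ereal_sup_gt => y [U [cU [pU dU]] <-] LU.
  apply: (@le_trans _ _ (diam_cover d U)); last by rewrite -EFinD.
  apply: ereal_inf_lbound.
  by exists U => //; split => //; split => //; exact: ltW.
Qed.
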